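(* Suppose that we have an online algorithm that solves the $(\gamma,C)$-bounded online factorization problem for a real $m\times N$ matrix $Q$ with rows $q_1,\ldots,q_m$, for some fixed $C$ and every $\gamma>0$. Then, for any $c>0$, there is an online factorization algorithm for $Q$ in the row arrival model with factorization value $O\left(C\gamma_2(Q)\log(\gamma_2(Q)/\|q_1\|_\infty)^{\frac12+c}\right)$. Moreover, there is an online factorization algorithm for $Q^T$ in the column arrival model with factorization value $O(C\gamma_2(Q))$.
   Context: For a matrix, $\|R\|_{1\to2}$ is the maximum $\ell_2$ norm of a column, $\|L\|_{2\to\infty}$ the maximum $\ell_2$ norm of a row, and $\gamma_2(A)=\min\{\|L\|_{2\to\infty}\|R\|_{1\to2}:LR=A\}$; $\gamma_2(A)=\gamma_2(A^T)$. $Q_t$ is the submatrix of the first $t$ rows of $Q$. The $(\gamma,C)$-bounded online factorization problem: the algorithm receives $\gamma,C$ at time $0$ and chooses an initial (possibly empty) matrix $R_0$ with $N$ columns; at each time $t\ge1$ it receives row $q_t$ and must either (i) form $R_t$ by appending rows to $R_{t-1}$ and output a row $\ell_t$ with $\ell_tR_t=q_t$, such that $\|R_t\|_{1\to2}\le1$ and $\|L_t\|_{2\to\infty}\le C\gamma$ (where $L_t$ has rows $\ell_1,\ldots,\ell_t$ zero-padded), or (ii) (correctly) assert $\gamma_2(Q_t)>\gamma$. Row arrival model: rows arrive online (their number unknown); the algorithm chooses $R_0$, and at step $t$ appends rows to $R_{t-1}$ to get $R_t$ and outputs $\ell_t$ with $\ell_tR_t=q_t$, with $\|R_t\|_{1\to2}\le1$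 always; its factorization value is $\max_t\|\ell_t\|_2$. Column arrival model: the columns $a_1,a_2,\ldots$ arrive online; the algorithm chooses $L_0$, at step $t$ appends columns to $L_{t-1}$ to get $L_t$ and outputs a column $r_t$ with $L_tr_t=a_t$, $\|r_t\|_2\le1$; its factorization value is $\|L_N\|_{2\to\infty}$ for the final $L_N$. *)

(* Defs.v *)
From mathcomp Require Import all_boot all_order all_algebra.
From mathcomp Require Import all_classical all_reals all_analysis.
Set Implicit Arguments. Unset Strict Implicit. Unset Printing Implicit Defensive.
Import Order.TTheory GRing.Theory Num.Theory.
Local Open Scope ring_scope.

Section OnlineFactorization.
Variable R : realType.

Definition vnorm2 {N} (v : 'rV[R]_N) : R := Num.sqrt (\sum_(j < N) v 0 j ^+ 2).
Definition seqnorm2 (l : seq R) : R := Num.sqrt (\sum_(x <- l) x ^+ 2).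
Definition vnorminf {N} (v : 'rV[R]_N) : R := \big[Num.max/0]_(j < N) `|v 0 j|.

Definition norm_2inf {m k} (L : 'M[R]_(m, k)) : R :=
  \big[Num.max/0]_(i < m) vnorm2 (row i L).
Definition norm_12 {k N} (M : 'M[R]_(k, N)) : R :=
  \big[Num.max/0]_(j < N) vnorm2 ((col j M)^T).

Definition gamma2 {m N} (A : 'M[R]_(m, N)) : R :=
  inf [set x : R | exists (k : nat) (L : 'M[R]_(m, k)) (M : 'M[R]_(k, N)),
                     L *m M = A /\ x = norm_2inf L * norm_12 M].

Definition rows_of {m N} (Q : 'M[R]_(m, N)) : seq 'rV[R]_N :=
  [seq row i Q | i <- enum 'I_m].
Definition cols_of {N m} (A : 'M[R]_(N, m)) : seq 'cV[R]_N :=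
  [seq col i A | i <- enum 'I_m].
Definition mx_of_rows {N} (s : seq 'rV[R]_N) : 'M[R]_(size s, N) :=
  \matrix_(i < size s, j < N) (nth 0 s i) 0 j.

Definition colnorm_rows {N} (Rs : seq 'rV[R]_N) : R :=
  \big[Num.max/0]_(j < N) Num.sqrt (\sum_(r <- Rs) r 0 j ^+ 2).
Definition lincomb_rows {N} (l : seq R) (Rs : seq 'rV[R]_N) : 'rV[R]_N :=
  \sum_(i < size Rs) nth 0 l i *: nth 0 Rs i.
Definition rownorm_cols {N} (Ls : seq 'cV[R]_N) : R :=
  \big[Num.max/0]_(j < N) Num.sqrt (\sum_(c <- Ls) c j 0 ^+ 2).
Definition lincomb_cols {N} (r : seq R) (Ls : seq 'cV[R]_N) : 'cV[R]_N :=
  \sum_(i < size Ls) nth 0 r i *: nth 0 Ls i.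

(* A deterministic online algorithm: at time 0 it sees (gamma, C) and picks
   R_0; at time t it sees (gamma, C) and q_1..q_t and either asserts
   (None) or returns Some (rows appended to R_{t-1}, l_t). *)
Record bofa (N : nat) := BOFA {
  bofa_init : R -> R -> seq 'rV[R]_N ;
  bofa_step : R -> R -> seq 'rV[R]_N -> option (seq 'rV[R]_N * seq R) }.

Definition bofa_out {N} (A : bofa N) g C (h : seq 'rV[R]_N) (s : nat) :=
  odflt ([::], [::]) (bofa_step A g C (take s h)).

Definition bofa_R {N} (A : bofa N) g C (h : seq 'rV[R]_N) (t : nat) :=
  bofa_init A g C ++ flatten [seq (bofa_out A g C h s).1 | s <- iota 1 t].

Definition bofa_solves {N} (A : bofa N) (g C : R) {m} (Q : 'M[R]_(m, N)) : Prop :=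
  let h := rows_of Q in
  forall t : nat, (1 <= t <= m)%N ->
    (forall s : nat, (1 <= s < t)%N -> isSome (bofa_step A g C (take s h))) ->
    match bofa_step A g C (take t h) with
    | None => gamma2 (mx_of_rows (take t h)) > g
    | Some (_, l) =>
        [/\ size l = size (bofa_R A g C h t),
            lincomb_rows l (bofa_R A g C h t) = nth 0 h t.-1,
            colnorm_rows (bofa_R A g C h t) <= 1 &
            forall s : nat, (1 <= s <= t)%N ->
              seqnorm2 (bofa_out A g C h s).2 <= C * g]
    end.

Record rowalg (N : nat) := RowAlg {
  ra_init : seq 'rV[R]_N ;
  ra_step : seq 'rV[R]_N -> seq 'rV[R]_N * seq R }.

Definition ra_R {N} (B : rowalg N) (h : seq 'rV[R]_N) (t : nat) :=
  ra_init B ++ flatten [seq (ra_step B (take s h)).1 | s <- iota 1 t].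

Definition ra_valid {N} (B : rowalg N) {m} (Q : 'M[R]_(m, N)) : Prop :=
  let h := rows_of Q in
  forall t : nat, (1 <= t <= m)%N ->
    [/\ size (ra_step B (take t h)).2 = size (ra_R B h t),
        lincomb_rows (ra_step B (take t h)).2 (ra_R B h t) = nth 0 h t.-1 &
        colnorm_rows (ra_R B h t) <= 1].

Definition ra_value {N} (B : rowalg N) {m} (Q : 'M[R]_(m, N)) : R :=
  \big[Num.max/0]_(t < m) seqnorm2 (ra_step B (take t.+1 (rows_of Q))).2.

Record colalg (N : nat) := ColAlg {
  ca_init : seq 'cV[R]_N ;
  ca_step : seq 'cV[R]_N -> seq 'cV[R]_N * seq R }.

Definition ca_L {N} (B : colalg N) (h : seq 'cV[R]_N) (t : nat) :=
  ca_init B ++ flatten [seq (ca_step B (take s h)).1 | s <- iota 1 t].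

Definition ca_valid {N} (B : colalg N) {m} (A : 'M[R]_(N, m)) : Prop :=
  let h := cols_of A in
  forall t : nat, (1 <= t <= m)%N ->
    [/\ size (ca_step B (take t h)).2 = size (ca_L B h t),
        lincomb_cols (ca_step B (take t h)).2 (ca_L B h t) = nth 0 h t.-1 &
        seqnorm2 (ca_step B (take t h)).2 <= 1].

Definition ca_value {N} (B : colalg N) {m} (A : 'M[R]_(N, m)) : R :=
  rownorm_cols (ca_L B (cols_of A) m).

End OnlineFactorization.

(* Main.v *)
Require Import Defs.
From mathcomp Require Import all_boot all_order all_algebra.
From mathcomp Require Import all_classical all_reals all_analysis.
Import Order.TTheory GRing.Theory Num.Theory.
Local Open Scope ring_scope.
From mathcomp Require Import ring lra.

Module Helpers.
Set Implicit Arguments. Unset Strict Implicit.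
Local Open Scope ring_scope.
Local Open Scope classical_set_scope.

Section G2.
Variable R : realType.

Lemma cauchy_schwarz k (a b : 'I_k -> R) :
  (\sum_i a i * b i) ^+ 2 <= (\sum_i a i ^+ 2) * (\sum_i b i ^+ 2).
Proof.
have E : \sum_i \sum_j (a i * b j - a j * b i) ^+ 2 =
   2 * ((\sum_i a i ^+ 2) * (\sum_i b i ^+ 2) - (\sum_i a i * b i) ^+ 2).
  have -> : \sum_i \sum_j (a i * b j - a j * b i) ^+ 2 =
     \sum_i \sum_j (a i ^+ 2 * b j ^+ 2) + \sum_i \sum_j (a j ^+ 2 * b i ^+ 2)
     - 2 * \sum_i \sum_j (a i * b i * (a j * b j)).
    rewrite mulr_sumr -big_split -sumrB /=; apply: eq_bigr => i _.
    rewrite mulr_sumr -big_split -sumrB /=; apply: eq_bigr => j _.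
    ring.
  rewrite [in X in _ + X - _]exchange_big /= .
  have h1 : (\sum_i a i ^+ 2) * (\sum_i b i ^+ 2) = \sum_i \sum_j a i ^+ 2 * b j ^+ 2.
    by rewrite mulr_suml; apply: eq_bigr => i _; rewrite mulr_sumr.
  have h2 : (\sum_i a i * b i) ^+ 2 = \sum_i \sum_j a i * b i * (a j * b j).
    by rewrite expr2 mulr_suml; apply: eq_bigr => i _; rewrite mulr_sumr.
  rewrite h1 h2; ring.
have : 0 <= \sum_i \sum_j (a i * b j - a j * b i) ^+ 2.
  by apply: sumr_ge0 => i _; apply: sumr_ge0 => j _; apply: sqr_ge0.
rewrite E; lra.
Qed.

Lemma bigmax_ge0 n (F : 'I_n -> R) : 0 <= \big[Num.max/0]_(i < n) F i.
Proof. by elim/big_rec: _ => // i x _ hx; rewrite le_max hx orbT. Qed.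

Lemma norm_2inf_ge0 m k (L : 'M[R]_(m, k)) : 0 <= norm_2inf L.
Proof. exact: bigmax_ge0. Qed.
Lemma norm_12_ge0 k N (M : 'M[R]_(k, N)) : 0 <= norm_12 M.
Proof. exact: bigmax_ge0. Qed.

Definition g2set m N (A : 'M[R]_(m, N)) :=
  [set x : R | exists (k : nat) (L : 'M[R]_(m, k)) (M : 'M[R]_(k, N)),
                     L *m M = A /\ x = norm_2inf L * norm_12 M].

Lemma g2set_ne m N (A : 'M[R]_(m, N)) : g2set A !=set0.
Proof. by exists (norm_2inf A * norm_12 (1%:M : 'M[R]_N)), N, A, 1%:M; rewrite mulmx1. Qed.

Lemma g2set_lb m N (A : 'M[R]_(m, N)) : lbound (g2set A) 0.
Proof.
move=> x [k [L [M [_ ->]]]]; apply: mulr_ge0; [exact: norm_2inf_ge0|exact: norm_12_ge0].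
Qed.

Lemma gamma2_ge0 m N (A : 'M[R]_(m, N)) : 0 <= gamma2 A.
Proof. exact: lb_le_inf (g2set_ne A) (@g2set_lb m N A). Qed.

Lemma gamma2_le m N k (L : 'M[R]_(m, k)) (M : 'M[R]_(k, N)) :
  gamma2 (L *m M) <= norm_2inf L * norm_12 M.
Proof.
apply: (ge_inf (E := g2set (L *m M))); first by exists 0; exact: (@g2set_lb m N (L *m M)).
by exists k, L, M.
Qed.

Lemma vnorm2_row m k (L : 'M[R]_(m, k)) i :
  vnorm2 (row i L) = Num.sqrt (\sum_l L i l ^+ 2).
Proof. by rewrite /vnorm2; congr Num.sqrt; apply: eq_bigr => l _; rewrite mxE. Qed.

Lemma vnorm2_col k N (M : 'M[R]_(k, N)) j :
  vnorm2 ((col j M)^T) = Num.sqrt (\sum_l M l j ^+ 2).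
Proof. by rewrite /vnorm2; congr Num.sqrt; apply: eq_bigr => l _; rewrite !mxE. Qed.

Lemma entry_le_gamma2 m N (A : 'M[R]_(m, N)) i j : `|A i j| <= gamma2 A.
Proof.
rewrite /gamma2; apply: (lb_le_inf (g2set_ne A)) => x [k [L [M [<- ->]]]].
rewrite mxE.
have h1 : vnorm2 (row i L) <= norm_2inf L by rewrite /norm_2inf; exact: le_bigmax.
have h2 : vnorm2 ((col j M)^T) <= norm_12 M by rewrite /norm_12; exact: le_bigmax.
rewrite vnorm2_row in h1; rewrite vnorm2_col in h2.
apply: le_trans (ler_pM _ _ h1 h2); rewrite ?sqrtr_ge0 //.
rewrite -sqrtrM; last by apply: sumr_ge0 => l _; apply: sqr_ge0.
rewrite -sqrtr_sqr ler_sqrt; last by apply: mulr_ge0; apply: sumr_ge0 => l _; apply: sqr_ge0.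
exact: cauchy_schwarz.
Qed.

Lemma gamma2_sel a b N (A : 'M[R]_(a, N)) (B : 'M[R]_(b, N)) (f : 'I_a -> 'I_b) :
  (forall i j, A i j = B (f i) j) -> gamma2 A <= gamma2 B.
Proof.
move=> hAB; rewrite /gamma2; apply: (lb_le_inf (g2set_ne B)) => x [k [L [M [hLM ->]]]].
pose L' := \matrix_(i < a, l < k) L (f i) l.
have -> : A = L' *m M.
  by apply/matrixP => i j; rewrite hAB -hLM !mxE; apply: eq_bigr => l _; rewrite mxE.
apply: le_trans (gamma2_le L' M) _.
apply: ler_wpM2r; first exact: norm_12_ge0.
apply: bigmax_le; first exact: norm_2inf_ge0.
move=> i _; have -> : vnorm2 (row i L') = vnorm2 (row (f i) L).
  by rewrite !vnorm2_row; congr Num.sqrt; apply: eq_bigr => l _; rewrite mxE.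
rewrite /norm_2inf; exact: le_bigmax.
Qed.

Lemma rows_of_nth m N (Q : 'M[R]_(m, N)) (i : 'I_m) : nth 0 (rows_of Q) i = row i Q.
Proof. by rewrite /rows_of (nth_map i) ?size_enum_ord // nth_ord_enum. Qed.

Lemma size_rows_of m N (Q : 'M[R]_(m, N)) : size (rows_of Q) = m.
Proof. by rewrite size_map size_enum_ord. Qed.

Lemma gamma2_prefix m N (Q : 'M[R]_(m, N)) s :
  gamma2 (mx_of_rows (take s (rows_of Q))) <= gamma2 Q.
Proof.
have hs : (size (take s (rows_of Q)) <= m)%N by rewrite size_take_min size_rows_of geq_minr.
apply: (gamma2_sel (f := fun i => Ordinal (leq_trans (ltn_ord i) hs))) => i j.
have hi : (i < s)%N by have := ltn_ord i; rewrite [X in (_ < X)%N]size_take_min leq_min => /andP[].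
rewrite mxE nth_take //.
by rewrite (rows_of_nth Q (Ordinal (leq_trans (ltn_ord i) hs))) mxE.
Qed.

Lemma entry_prefix N (p : seq 'rV[R]_N) i j : (i < size p)%N ->
  `|nth 0 p i 0 j| <= gamma2 (mx_of_rows p).
Proof.
move=> hi; have := entry_le_gamma2 (mx_of_rows p) (Ordinal hi) j.
by rewrite mxE.
Qed.

Lemma gamma2_0rows N (Q : 'M[R]_(0, N)) : gamma2 Q = 0.
Proof.
apply/le_anti; rewrite gamma2_ge0 andbT.
have -> : Q = (0 : 'M[R]_(0, 0)) *m (0 : 'M[R]_(0, N)) by apply/matrixP => -[].
apply: le_trans (gamma2_le _ _) _.
by rewrite /norm_2inf big_ord0 mul0r.
Qed.

End G2.


Section W.
Variable R : realType.

Definition fw (a : R) (n : nat) : R := expR (- a * ln n%:R).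
Definition ww (a : R) (n : nat) : R := Num.sqrt (fw a n - fw a n.+1).

Lemma fw_gt0 a n : 0 < fw a n.
Proof. exact: expR_gt0. Qed.

Lemma fw_dec a n : 0 < a -> fw a n.+1 <= fw a n.
Proof.
move=> a0; rewrite /fw ler_expR.
case: n => [|n].
  by rewrite (@ln0 _ 0%:R) // ln1 !mulr0.
rewrite !mulNr lerN2 ler_pM2l // ler_ln ?posrE ?ltr0n //.
all: try by rewrite ler_nat.
Qed.

Lemma ww_sq a n : 0 < a -> ww a n ^+ 2 = fw a n - fw a n.+1.
Proof. by move=> a0; rewrite sqr_sqrtr // subr_ge0 fw_dec. Qed.

Lemma ww_ge0 a n : 0 <= ww a n.
Proof. exact: sqrtr_ge0. Qed.

Lemma ln_step (n : nat) : (0 < n)%N -> (n.+1%:R)^-1 <= ln n.+1%:R - ln n%:R :> R.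
Proof.
move=> n0.
have hn : (0 : R) < n%:R by rewrite ltr0n.
have hn1 : (0 : R) < n.+1%:R by rewrite ltr0n.
have h1 := expR_ge1Dx (- (n.+1%:R)^-1 : R).
have e : 1 + - (n.+1%:R : R)^-1 = n%:R / n.+1%:R.
  rewrite -natr1 in hn1 *; field; lra.
rewrite e in h1.
have hp : (0 : R) < n%:R / n.+1%:R by apply: divr_gt0.
have h2 : ln (n%:R / n.+1%:R) <= ln (expR (- (n.+1%:R)^-1)) :> R.
  by rewrite ler_ln ?posrE ?expR_gt0.
move: h2; rewrite expRK.
rewrite lnM ?posrE ?invr_gt0 // lnV ?posrE //.
set u := ln (n.+1%:R : R); set v := ln (n%:R : R); set z := (n.+1%:R : R)^-1.
move=> ?; lra.
Qed.

Lemma ww_lb a (n : nat) : 0 < a -> (0 < n)%N ->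
  a / (2 + a) * expR (- (1 + a) * ln n%:R) <= ww a n ^+ 2.
Proof.
move=> a0 n0; rewrite ww_sq //.
have hn : (0 : R) < n%:R by rewrite ltr0n.
have hn1 : (0 : R) < n.+1%:R by rewrite ltr0n.
set y := a * (ln n.+1%:R - ln n%:R).
have hy : a / n.+1%:R <= y by rewrite /y ler_pM2l // ln_step.
have hy0 : 0 <= a / n.+1%:R by apply: divr_ge0; lra.
have ef : fw a n.+1 = fw a n * expR (- y).
  by rewrite /fw -expRD /y; congr expR; ring.
have ey : expR (- y) * (1 + y) <= 1.
  by rewrite expRN -[X in _ <= X](@divff _ (expR y)) ?expR_eq0 // mulrC ler_pM2r ?invr_gt0 ?expR_gt0 // expR_ge1Dx.
have en : expR (- (1 + a) * ln n%:R) = fw a n / n%:R.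
  by rewrite /fw -[X in _ / X](lnK (x := n%:R)) ?posrE // -expRN -expRD; congr expR; ring.
rewrite en ef.
have fpos := fw_gt0 a n.
set F := fw a n in fpos *.
set E := expR (- y) in ey *.
have key : a / (2 + a) / n%:R <= 1 - E.
  have hE : E <= (1 + y)^-1.
    have hy1 : 0 < 1 + y by have := le_trans hy0 hy; lra.
    by rewrite -[X in _ <= X]mul1r ler_pdivlMr.
  apply: le_trans (_ : 1 - (1 + a / n.+1%:R)^-1 <= _).
    have -> : 1 - (1 + a / n.+1%:R)^-1 = a / (n.+1%:R + a).
      field; apply/andP; split; apply: lt0r_neq0; lra.
    rewrite -mulrA -invfM ler_pM2l // lef_pV2 ?posrE; try lra.
      rewrite -natr1; have : (1 : R) <= n%:R by rewrite ler1n. nra.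
    by apply: mulr_gt0; lra.
  rewrite lerD2l lerN2; apply: le_trans hE _.
  have hy1 : 0 < 1 + y by have := le_trans hy0 hy; lra.
  set q := a / n.+1%:R in hy hy0 *.
  rewrite lef_pV2 ?posrE //; lra.
have : F * (a / (2 + a) / n%:R) <= F * (1 - E) by rewrite ler_pM2l.
rewrite !mulrA; lra.
Qed.

End W.

Section W2.
Variable R : realType.

Lemma ww_inv_bound (c : R) : 0 < c -> exists K1 : R, 0 < K1 /\
  forall (n : nat) (X : R), (0 < n)%N -> 0 < X -> 2 ^+ n <= 4 * X ->
    (ww (2 * c) n)^-1 <= K1 * (Num.max 1 (ln X)) `^ (2^-1 + c).
Proof.
move=> c0.
set a := 2 * c; set e := 2^-1 + c.
have a0 : 0 < a by rewrite /a; lra.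
set d := a / (2 + a).
have d0 : 0 < d by rewrite /d divr_gt0 //; lra.
have L20 : (0 : R) < ln 2 by apply: ln_gt0; lra.
set b := 2 + (ln (2 : R))^-1.
have b0 : 0 < b by rewrite /b; have := invr_gt0 (ln (2:R)); rewrite L20 => /= h; lra.
exists (expR (e * ln b) / Num.sqrt d); split.
  by apply: divr_gt0; rewrite ?expR_gt0 ?sqrtr_gt0.
move=> n X n0 X0 hX.
set M := Num.max 1 (ln X).
have M1 : 1 <= M by rewrite /M le_max lexx.
have lXM : ln X <= M by rewrite /M le_max lexx orbT.
have hn : (0 : R) < n%:R by rewrite ltr0n.
have hnb : n%:R <= b * M.
  have h1 : ln (2 ^+ n) <= ln (4 * X) :> R.
    by rewrite ler_ln ?posrE // ?exprn_gt0 //; lra.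
  rewrite lnXn in h1; last lra.
  rewrite lnM ?posrE in h1; try lra.
  have l4 : ln (4:R) = ln 2 + ln 2 by rewrite -lnM ?posrE //; congr ln; lra.
  rewrite l4 -[ln 2 *+ n]mulr_natl in h1.
  have eb : b * M * ln 2 = 2 * M * ln 2 + M.
    by rewrite /b; field; apply: lt0r_neq0.
  rewrite -(ler_pM2r L20) eb.
  set L := ln (2:R) in h1 L20 eb *; set lX := ln X in h1 lXM *.
  set nn := (n%:R : R) in h1 *.
  have hML : 0 <= (M - 1) * L by apply: mulr_ge0; lra.
  nra.
have hw2 : d * expR (- (1 + a) * ln n%:R) <= ww a n ^+ 2 by exact: ww_lb.
set E := expR (e * ln (n%:R : R)).
have E0 : 0 < E by exact: expR_gt0.
have eE : expR (- (1 + a) * ln (n%:R : R)) = (E ^+ 2)^-1.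
  rewrite /E -expRM_natr -expRN; by congr expR; rewrite /e /a; field.
rewrite eE in hw2.
have sd0 : 0 < Num.sqrt d by rewrite sqrtr_gt0.
have hw : Num.sqrt d / E <= ww a n.
  rewrite -[ww a n]ger0_norm ?ww_ge0 // -sqrtr_sqr.
  have -> : Num.sqrt d / E = Num.sqrt (d * (E ^+ 2)^-1).
    by rewrite (sqrtrM (E^+2)^-1 (ltW d0)) sqrtrV ?exprn_ge0 ?(ltW E0) // sqrtr_sqr ger0_norm // ltW.
  by rewrite ler_sqrt // exprn_ge0 // ww_ge0.
have w0 : 0 < ww a n by apply: lt_le_trans hw; apply: divr_gt0.
have hinv : (ww a n)^-1 <= E / Num.sqrt d.
  by rewrite -invf_div lef_pV2 ?posrE // divr_gt0.
apply: le_trans hinv _.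
have M0 : 0 < M by lra.
have hE : E <= expR (e * ln b) * M `^ e.
  rewrite /powR gt_eqF // -expRD ler_expR.
  have e0 : 0 < e by rewrite /e; have := invr_gt0 (2:R); lra.
  rewrite -mulrDr ler_pM2l // -lnM ?posrE //.
  by rewrite ler_ln ?posrE // mulr_gt0.
rewrite mulrAC ler_pM2r ?invr_gt0 //.
Qed.
End W2.


Section Lists.
Variables (R : realType) (N : nat).

Lemma lincomb_cons0 (c : seq R) (r : 'rV[R]_N) Rs :
  lincomb_rows (0 :: c) (r :: Rs) = lincomb_rows c Rs.
Proof. by rewrite /lincomb_rows /= big_ord_recl /= scale0r add0r. Qed.

Lemma lincomb_nseq (c : seq R) (P Rs : seq 'rV[R]_N) :
  lincomb_rows (nseq (size P) 0 ++ c) (P ++ Rs) = lincomb_rows c Rs.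
Proof. by elim: P => //= r P IH; rewrite lincomb_cons0. Qed.

Lemma lincomb_scale (l : seq R) (Rs : seq 'rV[R]_N) s : s != 0 -> size l = size Rs ->
  lincomb_rows (map (fun x => x / s) l) (map (fun r => s *: r) Rs) = lincomb_rows l Rs.
Proof.
move=> s0 hs; rewrite /lincomb_rows size_map; apply: eq_bigr => i _.
have hi := ltn_ord i.
rewrite (nth_map 0) ?hs // (nth_map 0) // scalerA mulfVK //.
Qed.

Lemma lincomb_nil (l : seq R) : lincomb_rows l ([::] : seq 'rV[R]_N) = 0.
Proof. by rewrite /lincomb_rows big_ord0. Qed.

Lemma sumsq_cat (P Rs : seq 'rV[R]_N) s j :
  \sum_(r <- P ++ map (fun r => s *: r) Rs) r 0 j ^+ 2 =
  \sum_(r <- P) r 0 j ^+ 2 + s ^+ 2 * \sum_(r <- Rs) r 0 j ^+ 2.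
Proof.
rewrite big_cat big_map mulr_sumr; congr (_ + _); apply: eq_bigr => r _.
by rewrite mxE exprMn.
Qed.

Lemma sumsq_ge0 (P : seq 'rV[R]_N) j : 0 <= \sum_(r <- P) r 0 j ^+ 2.
Proof. by apply: sumr_ge0 => r _; apply: sqr_ge0. Qed.

Lemma seqnorm2_coef k (l : seq R) s : 0 < s ->
  seqnorm2 (nseq k 0 ++ map (fun x => x / s) l) = seqnorm2 l / s.
Proof.
move=> s0; rewrite /seqnorm2 big_cat big_map /=.
have -> : \sum_(i <- nseq k (0:R)) i ^+ 2 = 0.
  by elim: k => [|k IH]; rewrite ?big_nil // big_cons IH expr0n addr0.
rewrite add0r.
have -> : \sum_(j <- l) (j / s) ^+ 2 = (\sum_(j <- l) j ^+ 2) / s ^+ 2.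
  by rewrite mulr_suml; apply: eq_bigr => x _; rewrite expr_div_n.
rewrite sqrtrM ?sumr_ge0 // => [|x _]; last exact: sqr_ge0.
by rewrite sqrtrV ?exprn_ge0 ?(ltW s0) // sqrtr_sqr gtr0_norm.
Qed.

Lemma colnorm_le1 (Rs : seq 'rV[R]_N) j : colnorm_rows Rs <= 1 ->
  \sum_(r <- Rs) r 0 j ^+ 2 <= 1.
Proof.
move=> h; have : Num.sqrt (\sum_(r <- Rs) r 0 j ^+ 2) <= 1.
  apply: le_trans h; rewrite /colnorm_rows.
  exact: le_bigmax.
by rewrite -[X in _ <= X -> _]sqrtr1 ler_sqrt.
Qed.

Lemma colnorm_bound (Rs : seq 'rV[R]_N) S : 0 <= S ->
  (forall j, \sum_(r <- Rs) r 0 j ^+ 2 <= S) -> colnorm_rows Rs <= Num.sqrt S.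
Proof.
move=> S0 h; apply: bigmax_le => [|j _]; first exact: sqrtr_ge0.
by rewrite ler_sqrt.
Qed.

End Lists.

Section Alg.
Variables (R : realType) (N : nat) (A : bofa R N) (C : R) (sg : nat -> R -> R).
Implicit Types h : seq 'rV[R]_N.

Definition Gt h t := gamma2 (mx_of_rows (take t h)).
Fixpoint lev h t : R :=
  if t is t'.+1 then (if Gt h t'.+1 <= lev h t' then lev h t' else 2 * Gt h t'.+1) else 0.
Fixpoint ph h t : nat :=
  if t is t'.+1 then (if Gt h t'.+1 <= lev h t' then ph h t' else (ph h t').+1) else 0.
Definition sig h t := sg (ph h t) (lev h t).
Fixpoint Ssum h t : R :=
  if t is t'.+1 then (if Gt h t'.+1 <= lev h t' then Ssum h t' else Ssum h t' + sig h t'.+1 ^+ 2)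
  else 0.
Definition bR h t := bofa_R A (lev h t) C h t.
Definition delta h t : seq 'rV[R]_N :=
  if lev h t == 0 then [::]
  else if Gt h t <= lev h t.-1 then map (fun r => sig h t *: r) (bofa_out A (lev h t) C h t).1
  else map (fun r => sig h t *: r) (bR h t).
Definition Tot h t := flatten [seq delta h s | s <- iota 1 t].
Definition coef h t : seq R :=
  if lev h t == 0 then [::]
  else nseq (size (Tot h t) - size (bR h t)) 0 ++
       map (fun x => x / sig h t) (bofa_out A (lev h t) C h t).2.

Section Local.
Variables (h : seq 'rV[R]_N) (t : nat).
Let h' := take t h.

Lemma Gt_loc s : (s <= t)%N -> Gt h' s = Gt h s.
Proof. by move=> st; rewrite /Gt /h' take_takel. Qed.

Lemma lev_ph_loc s : (s <= t)%N -> lev h' s = lev h s /\ ph h' s = ph h s.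
Proof.
elim: s => [|s IH] st //=.
have [-> ->] := IH (ltnW st); by rewrite Gt_loc.
Qed.

Lemma lev_loc s : (s <= t)%N -> lev h' s = lev h s.
Proof. by move=> /lev_ph_loc[]. Qed.
Lemma ph_loc s : (s <= t)%N -> ph h' s = ph h s.
Proof. by move=> /lev_ph_loc[]. Qed.
Lemma sig_loc s : (s <= t)%N -> sig h' s = sig h s.
Proof. by move=> st; rewrite /sig lev_loc // ph_loc. Qed.

Lemma Ssum_loc s : (s <= t)%N -> Ssum h' s = Ssum h s.
Proof.
elim: s => [|s IH] st //=.
by rewrite IH ?(ltnW st) // Gt_loc // lev_loc ?(ltnW st) // sig_loc.
Qed.

Lemma bout_loc g s : (s <= t)%N -> bofa_out A g C h' s = bofa_out A g C h s.
Proof. by move=> st; rewrite /bofa_out /h' take_takel. Qed.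

Lemma bofaR_loc g s : (s <= t)%N -> bofa_R A g C h' s = bofa_R A g C h s.
Proof.
move=> st; rewrite /bofa_R; congr (_ ++ flatten _); apply/eq_in_map => u.
rewrite mem_iota => /andP[_ hu]; rewrite bout_loc //.
apply: leq_trans st; by rewrite add1n ltnS in hu.
Qed.

Lemma bR_loc s : (s <= t)%N -> bR h' s = bR h s.
Proof. by move=> st; rewrite /bR lev_loc // bofaR_loc. Qed.

Lemma delta_loc s : (s <= t)%N -> delta h' s = delta h s.
Proof.
move=> st; rewrite /delta lev_loc // Gt_loc // lev_loc ?(leq_trans (leq_pred s)) //.
by rewrite sig_loc // bout_loc // bR_loc.
Qed.

Lemma Tot_loc s : (s <= t)%N -> Tot h' s = Tot h s.
Proof.
move=> st; rewrite /Tot; congr flatten; apply/eq_in_map => u.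
rewrite mem_iota => /andP[_ hu]; rewrite delta_loc //.
apply: leq_trans st; by rewrite add1n ltnS in hu.
Qed.

Lemma coef_loc s : (s <= t)%N -> coef h' s = coef h s.
Proof.
by move=> st; rewrite /coef lev_loc // Tot_loc // bR_loc // sig_loc // bout_loc.
Qed.

End Local.

Lemma Tot_S h t : Tot h t.+1 = Tot h t ++ delta h t.+1.
Proof. by rewrite /Tot -[t.+1]addn1 iotaD map_cat flatten_cat /= cats0 addnC. Qed.

Lemma bofaR_S g h t : bofa_R A g C h t.+1 = bofa_R A g C h t ++ (bofa_out A g C h t.+1).1.
Proof. by rewrite /bofa_R -[t.+1]addn1 iotaD map_cat flatten_cat /= cats0 addnC catA. Qed.

Lemma lev_ge0 h t : 0 <= lev h t.
Proof.
elim: t => [|t IH] //=; case: ifP => // _.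
by apply: mulr_ge0 => //; apply: gamma2_ge0.
Qed.

Lemma lev_S h t : lev h t <= lev h t.+1.
Proof.
rewrite /=; case: ifPn => // hn; have hlt : lev h t < Gt h t.+1 by rewrite ltNge.
have := gamma2_ge0 (mx_of_rows (take t.+1 h)); rewrite -/(Gt h t.+1) => g0; lra.
Qed.

Lemma lev_mono h s t : (s <= t)%N -> lev h s <= lev h t.
Proof.
elim: t => [|t IH]; first by rewrite leqn0 => /eqP->.
rewrite leq_eqVlt => /orP[/eqP->//|]; rewrite ltnS => /IH h1.
exact: le_trans h1 (lev_S h t).
Qed.

Lemma G_le_lev h s : Gt h s.+1 <= lev h s.+1.
Proof.
rewrite /=; case: ifPn => // _.
have := gamma2_ge0 (mx_of_rows (take s.+1 h)); rewrite -/(Gt h s.+1) => g0; lra.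
Qed.

Lemma ph_pos h t : 0 < lev h t -> (0 < ph h t)%N.
Proof.
elim: t => [|t IH] /=; first by rewrite ltxx.
by case: ifP.
Qed.

End Alg.

Section Inv.
Variables (R : realType) (N : nat) (A : bofa R N) (C : R) (sg : nat -> R -> R).
Variables (m : nat) (Q : 'M[R]_(m, N)).
Hypothesis Hsolve : forall g, 0 < g -> bofa_solves A g C Q.
Hypothesis Hsg : forall n g, (0 < n)%N -> 0 < g -> 0 < sg n g.
Let h := rows_of Q.
Local Notation sig := (sig sg).
Local Notation Ssum := (Ssum sg).
Local Notation bR := (bR A C).
Local Notation delta := (delta A C sg).
Local Notation Tot := (Tot A C sg).
Local Notation coef := (coef A C sg).

Lemma some_steps g t : 0 < g -> (t <= m)%N ->
  (forall s, (1 <= s <= t)%N -> Gt h s <= g) ->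
  forall s, (1 <= s <= t)%N -> isSome (bofa_step A g C (take s h)).
Proof.
move=> g0 tm hG; elim/ltn_ind => s IH /andP[s1 st].
have sm : (1 <= s <= m)%N by rewrite s1 (leq_trans st tm).
have hprev : forall s', (1 <= s' < s)%N -> isSome (bofa_step A g C (take s' h)).
  move=> s' /andP[h1 h2]; apply: IH => //; rewrite h1 /=.
  exact: leq_trans (ltnW h2) st.
have := Hsolve g0 sm hprev.
case: (bofa_step A g C (take s h)) => [[x l]|] //= hgt.
have := hG s; rewrite s1 st => /(_ isT); rewrite /Gt -/h.
by move=> hle; move: (lt_le_trans hgt hle); rewrite ltxx.
Qed.

Lemma step_spec g t : 0 < g -> (1 <= t <= m)%N ->
  (forall s, (1 <= s <= t)%N -> Gt h s <= g) ->
  [/\ size (bofa_out A g C h t).2 = size (bofa_R A g C h t),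
      lincomb_rows (bofa_out A g C h t).2 (bofa_R A g C h t) = nth 0 h t.-1,
      colnorm_rows (bofa_R A g C h t) <= 1 &
      seqnorm2 (bofa_out A g C h t).2 <= C * g].
Proof.
move=> g0 ht hG.
have tm : (t <= m)%N by case/andP: ht.
have hprev : forall s', (1 <= s' < t)%N -> isSome (bofa_step A g C (take s' h)).
  move=> s' /andP[h1 h2]; apply: (some_steps g0 tm hG); rewrite h1 /=.
  exact: ltnW.
have := Hsolve g0 ht hprev.
have t1 : (0 < t)%N by case/andP: ht.
have tt1 : (0 < t <= t)%N by rewrite t1 leqnn.
have := @some_steps g t g0 tm hG t tt1.
rewrite /bofa_out; case E: (bofa_step A g C (take t h)) => [[x l]|] //= _ [h1 h2 h3 h4].
split => //; have := h4 t tt1; by rewrite E.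
Qed.

Lemma Gs_le t s : (1 <= s <= t)%N -> Gt h s <= lev h t.
Proof.
case: s => // s /andP[_ st]; apply: le_trans (G_le_lev h s) _.
exact: lev_mono.
Qed.

Lemma Inv t : (t <= m)%N ->
  (lev h t = 0 -> Tot h t = [::] /\ Ssum h t = 0) /\
  (0 < lev h t -> exists P, Tot h t = P ++ map (fun r => sig h t *: r) (bR h t) /\
      forall j, \sum_(r <- P) r 0 j ^+ 2 <= Ssum h t - sig h t ^+ 2).
Proof.
elim: t => [|t IH] tm.
  split; first by [].
  by rewrite /= ltxx.
have [IH1 IH2] := IH (ltnW tm).
have l0 := lev_ge0 h t.
rewrite Tot_S.
case hsw: (Gt h t.+1 <= lev h t).
- have el : lev h t.+1 = lev h t by rewrite /= hsw.
  have es : sig h t.+1 = sig h t by rewrite /sig /= hsw.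
  have eS : Ssum h t.+1 = Ssum h t by rewrite /= hsw.
  have ed : delta h t.+1 = if lev h t == 0 then [::]
       else map (fun r => sig h t *: r) (bofa_out A (lev h t) C h t.+1).1.
    by rewrite /delta el /= hsw es.
  rewrite el es eS ed; split.
    by move=> /[dup] /eqP -> /IH1 [-> ->].
  move=> lp; have [P [hP hb]] := IH2 lp.
  exists P; split => //.
  rewrite (negbTE (lt0r_neq0 lp)) hP -catA -map_cat.
  by rewrite /bR el bofaR_S.
- have hlt : lev h t < Gt h t.+1 by rewrite ltNge hsw.
  have el : lev h t.+1 = 2 * Gt h t.+1 by rewrite /= hsw.
  have lp : 0 < lev h t.+1 by rewrite el; lra.
  have eS : Ssum h t.+1 = Ssum h t + sig h t.+1 ^+ 2 by rewrite /= hsw.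
  have ed : delta h t.+1 = map (fun r => sig h t.+1 *: r) (bR h t.+1).
    by rewrite /delta (negbTE (lt0r_neq0 lp)) /= hsw.
  split; first by move=> e0; move: lp; rewrite e0 ltxx.
  move=> _; exists (Tot h t); split; first by rewrite ed.
  move=> j; rewrite eS addrK.
  have [e0|lt0] := eqVneq (lev h t) 0.
    by have [-> ->] := IH1 e0; rewrite big_nil.
  have lt0' : 0 < lev h t by rewrite lt_neqAle eq_sym lt0 l0.
  have [P [hP hb]] := IH2 lt0'.
  have t1 : (1 <= t)%N by case: (t) lt0' => //=; rewrite ltxx.
  have ht : (1 <= t <= m)%N by rewrite t1 (ltnW tm).
  have [_ _ hc _] := step_spec lt0' ht (fun s hs => Gs_le hs).
  rewrite hP sumsq_cat.
  have := colnorm_le1 j hc; have := hb j.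
  have := sqr_ge0 (sig h t).
  set u := \sum_(r <- P) r 0 j ^+ 2; set v := \sum_(r <- _) _; set w := sig h t ^+ 2.
  move=> w0 hu hv; have : w * v <= w * 1 by apply: ler_wpM2l.
  lra.
Qed.

Lemma row_zero t : (1 <= t <= m)%N -> lev h t = 0 -> nth 0 h t.-1 = 0.
Proof.
move=> /andP[t1 tm] e0; apply/rowP => j; rewrite mxE; apply/eqP; rewrite -normr_le0.
have hs : (t.-1 < size (take t h))%N.
  by rewrite size_takel ?size_rows_of // prednK.
have := @entry_prefix R N (take t h) t.-1 j hs; rewrite nth_take ?prednK //.
move=> h1; apply: le_trans h1 _; rewrite -e0 -/(Gt h t).
by apply: Gs_le; rewrite t1 leqnn.
Qed.

Lemma valid_t t : (1 <= t <= m)%N ->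
 [/\ size (coef h t) = size (Tot h t),
     lincomb_rows (coef h t) (Tot h t) = nth 0 h t.-1,
     (forall j, \sum_(r <- Tot h t) r 0 j ^+ 2 <= Ssum h t) &
     seqnorm2 (coef h t) <= C * lev h t / sig h t].
Proof.
move=> ht; have tm : (t <= m)%N by case/andP: ht.
have [I1 I2] := Inv tm.
have [e0|ne0] := eqVneq (lev h t) 0.
  have [eT eS] := I1 e0.
  have ec : coef h t = [::] by rewrite /coef e0 eqxx.
  rewrite ec eT eS e0 lincomb_nil row_zero //; split => //.
    by move=> j; rewrite big_nil.
  by rewrite /seqnorm2 big_nil sqrtr0 mulr0 mul0r.
have lp : 0 < lev h t by rewrite lt_neqAle eq_sym ne0 lev_ge0.
have [P [hP hb]] := I2 lp.
have sp : 0 < sig h t.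
  by apply: Hsg => //; exact: ph_pos.
have [s1 s2 s3 s4] := step_spec lp ht (fun s hs => Gs_le hs).
have hsz : (size (Tot h t) - size (bR h t))%N = size P.
  by rewrite hP size_cat size_map addnK.
have ec : coef h t = nseq (size P) 0 ++ map (fun x => x / sig h t) (bofa_out A (lev h t) C h t).2.
  by rewrite /coef (negbTE ne0) hsz.
rewrite ec; split.
- by rewrite hP !size_cat size_nseq !size_map s1.
- by rewrite hP lincomb_nseq lincomb_scale ?s2 // lt0r_neq0.
- move=> j; rewrite hP sumsq_cat.
  have := colnorm_le1 j s3; have := hb j; have := sqr_ge0 (sig h t).
  set u := \sum_(r <- P) r 0 j ^+ 2; set v := \sum_(r <- _) _; set w := sig h t ^+ 2.
  move=> w0 hu hv; have : w * v <= w * 1 by apply: ler_wpM2l.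
  lra.
- by rewrite seqnorm2_coef // ler_pM2r ?invr_gt0.
Qed.

End Inv.

Section Wrap.
Variables (R : realType) (N : nat) (A : bofa R N) (C : R) (sg : nat -> R -> R).
Local Notation delta := (delta A C sg).
Local Notation Tot := (Tot A C sg).
Local Notation coef := (coef A C sg).

Definition RB : rowalg R N :=
  RowAlg [::] (fun p => (delta p (size p), coef p (size p))).

Lemma RB_step h t : (t <= size h)%N -> ra_step RB (take t h) = (delta h t, coef h t).
Proof.
by move=> th; rewrite /= size_takel // delta_loc // coef_loc.
Qed.

Lemma RB_R h t : (t <= size h)%N -> ra_R RB h t = Tot h t.
Proof.
move=> th; rewrite /ra_R /Tot /=; congr flatten; apply/eq_in_map => s.
rewrite mem_iota add1n ltnS => /andP[_ st].
by have := RB_step (leq_trans st th); case.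
Qed.

Definition CB : colalg R N :=
  ColAlg [::] (fun p => let p' := map trmx p in
     (map trmx (delta p' (size p')), coef p' (size p'))).

Lemma CB_step h t : (t <= size h)%N ->
  ca_step CB (take t (map trmx h)) = (map trmx (delta h t), coef h t).
Proof.
move=> th; rewrite /= -map_take mapK; last exact: trmxK.
by rewrite size_takel // delta_loc // coef_loc.
Qed.

Lemma CB_L h t : (t <= size h)%N -> ca_L CB (map trmx h) t = map trmx (Tot h t).
Proof.
move=> th; rewrite /ca_L /Tot /= map_flatten -map_comp; congr flatten; apply/eq_in_map => s.
rewrite mem_iota add1n ltnS => /andP[_ st].
by have := CB_step (leq_trans st th); case => -> _.
Qed.

End Wrap.

Section ColLemmas.
Variables (R : realType) (N : nat).

Lemma lincomb_cols_tr (r : seq R) (Ls : seq 'rV[R]_N) :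
  lincomb_cols r (map trmx Ls) = (lincomb_rows r Ls)^T.
Proof.
apply/matrixP => i j; rewrite /lincomb_cols /lincomb_rows !mxE size_map !summxE.
apply: eq_bigr => k _; rewrite !mxE (nth_map 0) ?mxE //.
Qed.

Lemma cols_of_tr m (Q : 'M[R]_(m, N)) : cols_of Q^T = map trmx (rows_of Q).
Proof. by rewrite /cols_of /rows_of -map_comp; apply: eq_map => i /=; rewrite tr_row. Qed.

Lemma rownorm_tr (Ls : seq 'rV[R]_N) :
  rownorm_cols (map trmx Ls) = colnorm_rows Ls.
Proof.
rewrite /rownorm_cols /colnorm_rows; apply: eq_bigr => j _; rewrite big_map.
by congr Num.sqrt; apply: eq_bigr => r _; rewrite mxE.
Qed.

Lemma seqnorm2_ge0 (l : seq R) : 0 <= seqnorm2 l.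
Proof. exact: sqrtr_ge0. Qed.

Lemma seqnorm2_le0 (l : seq R) : seqnorm2 l <= 0 -> forall i, nth 0 l i = 0.
Proof.
elim: l => [|x l IH] h0 i; first by rewrite nth_nil.
have hs : x ^+ 2 + \sum_(y <- l) y ^+ 2 <= 0.
  have : seqnorm2 (x :: l) == 0 by rewrite eq_le h0 seqnorm2_ge0.
  by rewrite /seqnorm2 sqrtr_eq0 big_cons.
have hx := sqr_ge0 x; have hl : 0 <= \sum_(y <- l) y ^+ 2.
  by apply: sumr_ge0 => y _; exact: sqr_ge0.
case: i => [|i] /=.
  by apply/eqP; rewrite -sqrf_eq0 eq_le sqr_ge0 andbT; lra.
apply: IH; have : \sum_(y <- l) y ^+ 2 <= 0 by lra.
by rewrite -sqrtr_eq0 => /eqP; rewrite /seqnorm2 => ->.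
Qed.

Lemma lincomb_zero (l : seq R) (Rs : seq 'rV[R]_N) : seqnorm2 l <= 0 ->
  lincomb_rows l Rs = 0.
Proof.
move=> h0; rewrite /lincomb_rows big1 // => i _.
by rewrite seqnorm2_le0 // scale0r.
Qed.

End ColLemmas.


Section P2.
Variable R : realType.

Lemma Ssum_bound2 N (C : R) (h : seq 'rV[R]_N) t :
  Ssum (fun _ g => C * g) h t <= 4 / 3 * (C * lev h t) ^+ 2.
Proof.
elim: t => [|t IH] /=; first by rewrite mulr0 expr0n /= mulr0.
have l0 := lev_ge0 h t; have g0 := gamma2_ge0 (mx_of_rows (take t.+1 h)).
rewrite -/(Gt h t.+1) in g0.
case hsw: (Gt h t.+1 <= lev h t) => //.
have hlt : lev h t < Gt h t.+1 by rewrite ltNge hsw.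
rewrite /sig /= hsw.
set G := Gt h t.+1 in g0 hlt *; set L := lev h t in l0 hlt IH *.
have : (C * L) ^+ 2 <= (C * G) ^+ 2.
  rewrite !exprMn ler_wpM2l ?sqr_ge0 //; rewrite ler_sqr ?nnegrE //.
  all: lra.
Qed.

Lemma lev_le2 m N (Q : 'M[R]_(m, N)) t : lev (rows_of Q) t <= 2 * gamma2 Q.
Proof.
elim: t => [|t IH] /=; first by rewrite mulr_ge0 // gamma2_ge0.
case: ifP => // _; rewrite ler_pM2l //; exact: gamma2_prefix.
Qed.

Lemma part2 : exists K0 : R, 0 < K0 /\
   forall (N : nat) (C : R) (A : bofa R N), exists B : colalg R N,
   forall (m : nat) (Q : 'M[R]_(m, N)),
     (forall g : R, 0 < g -> bofa_solves A g C Q) ->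
     ca_valid B Q^T /\ ca_value B Q^T <= K0 * C * gamma2 Q.
Proof.
exists 3; split => // N C A.
case: (ltrP 0 C) => C0.
- exists (CB A C (fun _ g => C * g)) => m Q Hs.
  have Hsg : forall (n : nat) (g : R), (0 < n)%N -> 0 < g -> 0 < C * g.
    by move=> n g _ g0; apply: mulr_gt0.
  rewrite /ca_valid /ca_value cols_of_tr.
  set h := rows_of Q.
  have G0 := gamma2_ge0 Q.
  split.
  + move=> t ht; have th : (t <= size h)%N by rewrite size_rows_of; case/andP: ht.
    rewrite CB_step // CB_L //=.
    have [v1 v2 v3 v4] := valid_t Hs Hsg ht.
    split.
    * by rewrite size_map.
    * rewrite lincomb_cols_tr v2 (nth_map 0) //.
      by apply: leq_trans th; rewrite prednK //; case/andP: ht.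
    * apply: le_trans v4 _; rewrite /sig.
      have [->|ne] := eqVneq (C * lev h t) 0; first by rewrite mul0r.
      by rewrite mulfV.
  + rewrite CB_L ?size_rows_of // rownorm_tr.
    have -> : 3 * C * gamma2 Q = Num.sqrt ((3 * C * gamma2 Q) ^+ 2).
      by rewrite sqrtr_sqr ger0_norm // mulr_ge0 // mulr_ge0 // ltW.
    apply: colnorm_bound => [|j]; first exact: sqr_ge0.
    have [m0|mpos] := posnP m.
      have e : forall t, t = 0%N -> Tot A C (fun _ g => C * g) h t = [::] by move=> t ->.
      by rewrite e // big_nil sqr_ge0.
    have hm : (1 <= m <= m)%N by rewrite mpos leqnn.
    have [_ _ v3 _] := valid_t Hs Hsg hm.
    apply: le_trans (v3 j) _; apply: le_trans (Ssum_bound2 _ _ _) _.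
    have := lev_le2 Q m; have := lev_ge0 h m; rewrite -/h.
    set L := lev h m; set G := gamma2 Q => l0 lG.
    rewrite !exprMn; have c2 : 0 <= C ^+ 2 by exact: sqr_ge0.
    set c := C ^+ 2 in c2 *.
    have : L ^+ 2 <= (2 * G) ^+ 2 by rewrite ler_sqr ?nnegrE // mulr_ge0.
    rewrite exprMn => hh; nra.
- exists (ColAlg [::] (fun _ => ([::], [::]))) => m Q Hs.
  have eL : forall (hh : seq 'cV[R]_N) t,
      ca_L (ColAlg [::] (fun _ => ([::], [::]))) hh t = [::].
    by move=> hh t; rewrite /ca_L /=; elim: (iota 1 t).
  have r0 : rownorm_cols ([::] : seq 'cV[R]_N) = 0.
    by apply/le_anti; rewrite bigmax_ge0 andbT; apply: bigmax_le => // j _; rewrite big_nil sqrtr0.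
  rewrite /ca_valid /ca_value eL r0.
  case: m Q Hs => [|m] Q Hs.
    split; last by rewrite gamma2_0rows mulr0.
    by move=> t /andP[t1 t0]; move: (leq_trans t1 t0).
  set h := rows_of Q.
  have G0 := gamma2_ge0 Q.
  set g := 2 * gamma2 Q + 1.
  have g0 : 0 < g by rewrite /g; lra.
  have hG : forall t s, (1 <= s <= t)%N -> Gt h s <= g.
    move=> t s _; apply: le_trans (gamma2_prefix Q s) _; rewrite /g; lra.
  have qz : forall t, (1 <= t <= m.+1)%N -> nth 0 h t.-1 = 0.
    move=> t ht; have [_ s2 _ s4] := step_spec Hs g0 ht (hG t).
    rewrite -s2 lincomb_zero //; apply: le_trans s4 _.
    nra.
  have h11 : (1 <= 1 <= m.+1)%N by [].
  have [_ _ _ s4] := step_spec Hs g0 h11 (hG 1%N).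
  have := le_trans (seqnorm2_ge0 _) s4 => hCg.
  have C0' : 0 <= C by nra.
  have eC : C = 0 by apply/le_anti; rewrite C0.
  split; last by rewrite eC mulr0 mul0r.
  move=> t ht; rewrite eL /=; split => //.
  * rewrite /lincomb_cols big_ord0 cols_of_tr (nth_map 0) ?qz ?trmx0 //.
    rewrite size_rows_of; case/andP: ht => t1 tm; by rewrite prednK.
  * by rewrite /seqnorm2 big_nil sqrtr0.
Qed.

End P2.

Section P1.
Variable R : realType.

Lemma Ssum_eq1 N (a : R) (h : seq 'rV[R]_N) t : 0 < a ->
  Ssum (fun n _ => ww a n) h t = 1 - fw a (ph h t).+1.
Proof.
move=> a0; elim: t => [|t IH] /=.
  by rewrite /fw ln1 mulr0 expR0 subrr.
case hsw: (Gt h t.+1 <= lev h t) => //.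
rewrite IH /sig /= hsw ww_sq //; ring.
Qed.

Lemma pw_inv N (h : seq 'rV[R]_N) (q : R) : 0 <= q ->
  (forall s, (0 < s)%N -> q <= Gt h s) ->
  forall t, 2 ^+ ph h t * q <= 2 * Num.max q (lev h t).
Proof.
move=> q0 hq; elim => [|t IH] /=.
  have : q <= Num.max q 0 by rewrite le_max lexx.
  rewrite expr0; lra.
case hsw: (Gt h t.+1 <= lev h t) => //.
have hlt : lev h t < Gt h t.+1 by rewrite ltNge hsw.
have hqG := hq t.+1 isT.
have hM : Num.max q (lev h t) <= Gt h t.+1 by rewrite ge_max hqG ltW.
have hM2 : 2 * Gt h t.+1 <= Num.max q (2 * Gt h t.+1) by rewrite le_max lexx orbT.
rewrite exprS; set P := 2 ^+ ph h t in IH *.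
have : P * q * 2 <= 2 * Num.max q (lev h t) * 2 by rewrite ler_pM2r.
lra.
Qed.

Lemma aux2 (x y : R) : 0 <= x -> x <= y -> x <= 2 * y.
Proof. move=> *; lra. Qed.

Lemma reassoc (k c g p : R) : 2 * k * c * g * p = c * (2 * g) * (k * p).
Proof. ring. Qed.

Lemma aux_pos (x y : R) : 0 < y -> 0 <= x * y -> 0 <= x.
Proof. move=> *; nra. Qed.

Lemma aux4 (x y : R) : x <= 2 * y -> 2 * x <= 4 * y.
Proof. move=> *; lra. Qed.

Lemma part1 : forall c : R, 0 < c ->
   exists K : R, 0 < K /\
   forall (N : nat) (C : R) (A : bofa R N), exists B : rowalg R N,
   forall (m : nat) (Q : 'M[R]_(m, N)),
     nth 0 (rows_of Q) 0 != 0 ->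
     (forall g : R, 0 < g -> bofa_solves A g C Q) ->
     ra_valid B Q /\
     ra_value B Q <= K * C * gamma2 Q *
       (Num.max 1 (ln (gamma2 Q / vnorminf (nth 0 (rows_of Q) 0))))
         `^ (2^-1 + c).
Proof.
move=> c c0; have [K1 [K10 hK1]] := ww_inv_bound c0.
exists (2 * K1); split; first lra.
move=> N C A; set a := 2 * c.
have a0 : 0 < a by rewrite /a; lra.
set sg := fun (n : nat) (_ : R) => ww a n.
exists (RB A C sg) => m Q q1 Hs.
have Hsg : forall (n : nat) (g : R), (0 < n)%N -> 0 < g -> 0 < sg n g.
  move=> n g n0 _; rewrite /sg.
  have := ww_lb a0 n0.
  have := mulr_gt0 (divr_gt0 a0 (_ : 0 < 2 + a)) (expR_gt0 (- (1 + a) * ln n%:R)).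
  move=> /(_ ltac:(lra)) hp hle.
  have w2 : 0 < ww a n ^+ 2 by exact: lt_le_trans hp hle.
  rewrite lt_neqAle ww_ge0 andbT eq_sym; apply/negP => /eqP e.
  by move: w2; rewrite e expr0n ltxx.
set h := rows_of Q.
have hsz : size h = m by rewrite size_rows_of.
set q1v := nth 0 h 0.
set q := vnorminf q1v.
have [j0 hj0] : exists j, q1v 0 j != 0.
  case: (boolP [exists j, q1v 0 j != 0]) => [/existsP //|/existsPn H].
  exfalso; apply: (negP q1).
  apply/eqP/rowP => j; rewrite mxE; exact/eqP/negPn/H.
have m0 : (0 < m)%N.
  rewrite lt0n; apply/negP => /eqP e; move: q1.
  by rewrite nth_default ?eqxx // size_rows_of e.
have q0 : 0 < q.
  apply: lt_le_trans (_ : 0 < `|q1v 0 j0|) _; first by rewrite normr_gt0.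
  rewrite /q /vnorminf. exact: le_bigmax.
have hq : forall s, (0 < s)%N -> q <= Gt h s.
  move=> s s0; apply: bigmax_le => [|j _]; first exact: gamma2_ge0.
  have hs : (0 < size (take s h))%N by rewrite size_take_min leq_min s0 hsz m0.
  have := @entry_prefix R N (take s h) 0 j hs.
  by rewrite nth_take.
set G := gamma2 Q.
have qG : q <= G by apply: le_trans (hq 1%N isT) _; exact: gamma2_prefix.
have L10 : 0 < lev h 1 by apply: lt_le_trans q0 _; apply: le_trans (hq 1%N isT) (G_le_lev h 0).
have h11 : (1 <= 1 <= m)%N by rewrite leqnn m0.
have [_ _ _ s41] := step_spec Hs L10 h11 (fun s hs => Gs_le Q hs).
have C0 : 0 <= C by apply: aux_pos L10 _; exact: le_trans (seqnorm2_ge0 _) s41.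
split.
- move=> t ht; have th : (t <= size h)%N by rewrite hsz; case/andP: ht.
  rewrite RB_step // RB_R //.
  have [v1 v2 v3 v4] := valid_t Hs Hsg ht.
  split => //.
  rewrite -sqrtr1; apply: colnorm_bound => // j; apply: le_trans (v3 j) _.
  rewrite Ssum_eq1 //; have := fw_gt0 a (ph h t).+1; lra.
- rewrite /ra_value; apply: bigmax_le => [|t _].
    rewrite !mulr_ge0 ?powR_ge0 ?gamma2_ge0 //; exact: ltW.
  have ht : (1 <= t.+1 <= m)%N by rewrite ltn_ord.
  rewrite RB_step ?hsz ?ltn_ord //=.
  have [_ _ _ v4] := valid_t Hs Hsg ht.
  apply: le_trans v4 _; rewrite /sig /sg.
  set L := lev h t.+1; set n := ph h t.+1.
  have L0 : 0 < L by apply: lt_le_trans q0 _; apply: le_trans (hq t.+1 isT) (G_le_lev h t).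
  have n0 : (0 < n)%N by exact: ph_pos.
  have LG : L <= 2 * G by exact: lev_le2.
  have [_ _ _ s4] := step_spec Hs L0 ht (fun s hs => Gs_le Q hs).
  have hpw := pw_inv (ltW q0) hq t.+1; rewrite -/n -/L in hpw.
  have hMG : Num.max q L <= 2 * G by rewrite ge_max LG andbT aux2 // ltW.
  have h2n : 2 ^+ n <= 4 * (G / q).
    rewrite mulrA ler_pdivlMr //; apply: le_trans hpw _.
    exact: aux4.
  have X0 : 0 < G / q by apply: divr_gt0 => //; exact: lt_le_trans q0 qG.
  have hw := hK1 n (G / q) n0 X0 h2n.
  have wi0 : 0 <= (ww a n)^-1 by rewrite invr_ge0 ww_ge0.
  rewrite reassoc.
  apply: ler_pM => //; first by apply: mulr_ge0 => //; exact: ltW.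
  by apply: ler_wpM2l.
Qed.

End P1.

End Helpers.
Unset Implicit Arguments. Set Strict Implicit.

Theorem lemma3p1 (R : realType) :
  (forall c : R, 0 < c ->
   exists K : R, 0 < K /\
   forall (N : nat) (C : R) (A : bofa R N), exists B : rowalg R N,
   forall (m : nat) (Q : 'M[R]_(m, N)),
     nth 0 (rows_of Q) 0 != 0 ->
     (forall g : R, 0 < g -> bofa_solves A g C Q) ->
     ra_valid B Q /\
     ra_value B Q <= K * C * gamma2 Q *
       (Num.max 1 (ln (gamma2 Q / vnorminf (nth 0 (rows_of Q) 0))))
         `^ (2^-1 + c))
  /\
  (exists K0 : R, 0 < K0 /\
   forall (N : nat) (C : R) (A : bofa R N), exists B : colalg R N,
   forall (m : nat) (Q : 'M[R]_(m, N)),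
     (forall g : R, 0 < g -> bofa_solves A g C Q) ->
     ca_valid B Q^T /\ ca_value B Q^T <= K0 * C * gamma2 Q).
Proof.
split; [exact: (@Helpers.part1 R) | exact: (@Helpers.part2 R)].
Qed.
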